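(* Suppose the graph is complete with $a_{ij}=a>0$ for all $i\neq j$. Consider the $N$ iOFP systems (some constant $\sigma\in\mathbb R$) with exosystem disturbances as in the context. Attach to each edge $g=1,\dots,E$ a passive system $\dot\eta_g=\psi_g(\eta_g,\varrho_g)$, $v_{1g}=\varphi_g(\eta_g,\varrho_g)$, $\varrho_g=\sum_j b_{jg}y_j$, $\psi_g$ locally Lipschitz, $\varphi_g$ continuous, with a positive definite $\Psi_g$ satisfying $\dot\Psi_g(\eta_g)\le v_{1g}^\top\varrho_g$. With $\rho_i=\sum_j a_{ij}(y_j-y_i)$ apply $$\dot\xi_i=s_i(\xi_i)-R_i^\top\rho_i,\quad \dot\kappa_g=\delta_g\varrho_g^\top\varrho_g\ (\delta_g>0),\quad v_{2g}=\kappa_g\varrho_g,\quad u_i=-R_i\xi_i-\sum_{g=1}^E b_{ig}(v_{1g}+v_{2g}).$$ If the closed-loop solution $(x,\eta,\xi,\kappa)$ is bounded, then the outputs synchronize asymptotically: $\lim_{t\to\infty}\|y_i(t)-y_j(t)\|=0$ for all $i,j$.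
   Context: Systems $\dot x_i=f(x_i,u_i,d_i)$, $y_i=h(x_i)$, $x_i\in\mathbb R^n$, $u_i,y_i,d_i\in\mathbb R^q$, $f$ locally Lipschitz, $h$ continuously differentiable. iOFP with constant $\sigma\in\mathbb R$: there exist continuously differentiable $\Phi\ge0$ and class-$\mathcal K_\infty$ $\underline\alpha,\overline\alpha$ with $\underline\alpha(\|x_i-x_i'\|)\le\Phi(x_i,x_i')\le\overline\alpha(\|x_i-x_i'\|)$ and $\frac{\partial\Phi}{\partial x_i}f(x_i,u_i,d_i)+\frac{\partial\Phi}{\partial x_i'}f(x_i',u_i',d_i')\le\sigma\|y_i-y_i'\|^2+(y_i-y_i')^\top((u_i+d_i)-(u_i'+d_i'))$. Exosystems: $\dot w_i=s_i(w_i)$, $d_i=R_iw_i$, $w_i\in\mathbb R^{m_i}$, $s_i$ locally Lipschitz, $s_i(0)=0$, $(w_i-w_i')^\top(s_i(w_i)-s_i(w_i'))\le0$. Incidence matrix $B\in\mathbb R^{N\times E}$: for the $g$-th edge $(i,j)$, $b_{ig}=-\sqrt{a_{ij}}$, $b_{jg}=\sqrt{a_{ij}}$, other entries zero. *)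

(* Defs.v *)
From mathcomp Require Import all_boot.
From Stdlib Require Import Reals.
Set Implicit Arguments. Unset Strict Implicit.
Open Scope R_scope.

Definition vec (n : nat) := 'I_n -> R.
Definition rsum (n : nat) (F : 'I_n -> R) : R := \big[Rplus/R0]_(k < n) F k.
Definition dot n (u v : vec n) : R := rsum (fun k => u k * v k).
Definition vnorm n (v : vec n) : R := sqrt (dot v v).
Definition vsub n (u v : vec n) : vec n := fun k => u k - v k.
Definition vadd n (u v : vec n) : vec n := fun k => u k + v k.
Definition vzero n : vec n := fun _ => 0.
Definition matvec q m (M : 'I_q -> 'I_m -> R) (w : vec m) : vec q :=
  fun k => rsum (fun l => M k l * w l).
Definition matTvec q m (M : 'I_q -> 'I_m -> R) (v : vec q) : vec m :=
  fun l => rsum (fun k => M k l * v k).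
Definition vupd n (x : vec n) (k : 'I_n) (s : R) : vec n :=
  fun j => if j == k then s else x j.

Definition cont_map n m (F : vec n -> vec m) :=
  forall x eps, 0 < eps -> exists dl, 0 < dl /\
    forall x', vnorm (vsub x' x) < dl -> vnorm (vsub (F x') (F x)) < eps.
Definition cont_map2 n p m (F : vec n -> vec p -> vec m) :=
  forall x y eps, 0 < eps -> exists dl, 0 < dl /\
    forall x' y', vnorm (vsub x' x) + vnorm (vsub y' y) < dl ->
      vnorm (vsub (F x' y') (F x y)) < eps.

Definition loclip1 n m (F : vec n -> vec m) :=
  forall x0, exists r L, 0 < r /\
    forall x x', vnorm (vsub x x0) < r -> vnorm (vsub x' x0) < r ->
      vnorm (vsub (F x) (F x')) <= L * vnorm (vsub x x').
Definition loclip2 n p m (F : vec n -> vec p -> vec m) :=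
  forall x0 y0, exists r L, 0 < r /\
    forall x y x' y',
      vnorm (vsub x x0) + vnorm (vsub y y0) < r ->
      vnorm (vsub x' x0) + vnorm (vsub y' y0) < r ->
      vnorm (vsub (F x y) (F x' y')) <= L * (vnorm (vsub x x') + vnorm (vsub y y')).
Definition loclip3 n p r m (F : vec n -> vec p -> vec r -> vec m) :=
  forall x0 y0 z0, exists rad L, 0 < rad /\
    forall x y z x' y' z',
      vnorm (vsub x x0) + vnorm (vsub y y0) + vnorm (vsub z z0) < rad ->
      vnorm (vsub x' x0) + vnorm (vsub y' y0) + vnorm (vsub z' z0) < rad ->
      vnorm (vsub (F x y z) (F x' y' z')) <=
        L * (vnorm (vsub x x') + vnorm (vsub y y') + vnorm (vsub z z')).

Definition is_C1_grad n (F : vec n -> R) (G : vec n -> vec n) :=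
  (forall x k, derivable_pt_lim (fun s => F (vupd x k s)) (x k) (G x k)) /\
  cont_map G.
Definition is_C1_grad2 n (F : vec n -> vec n -> R) (G1 G2 : vec n -> vec n -> vec n) :=
  (forall x x' k, derivable_pt_lim (fun s => F (vupd x k s) x') (x k) (G1 x x' k)) /\
  (forall x x' k, derivable_pt_lim (fun s => F x (vupd x' k s)) (x' k) (G2 x x' k)) /\
  cont_map2 G1 /\ cont_map2 G2.
Definition C1map n q (h : vec n -> vec q) :=
  forall j, exists G, is_C1_grad (fun x => h x j) G.

Definition classKinf (al : R -> R) :=
  al 0 = 0 /\
  (forall s t, 0 <= s -> s < t -> al s < al t) /\
  (forall s, 0 <= s -> forall eps, 0 < eps -> exists dl, 0 < dl /\
     forall s', 0 <= s' -> Rabs (s' - s) < dl -> Rabs (al s' - al s) < eps) /\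
  (forall M, exists s, 0 <= s /\ M < al s).

Definition iOFP n q (f : vec n -> vec q -> vec q -> vec n) (h : vec n -> vec q) (sigma : R) :=
  exists (Phi : vec n -> vec n -> R) (G1 G2 : vec n -> vec n -> vec n) (al_lo al_hi : R -> R),
    is_C1_grad2 Phi G1 G2 /\ classKinf al_lo /\ classKinf al_hi /\
    (forall x x', 0 <= Phi x x' /\
       al_lo (vnorm (vsub x x')) <= Phi x x' /\ Phi x x' <= al_hi (vnorm (vsub x x'))) /\
    (forall x x' u u' d d',
       dot (G1 x x') (f x u d) + dot (G2 x x') (f x' u' d') <=
       sigma * dot (vsub (h x) (h x')) (vsub (h x) (h x'))
       + dot (vsub (h x) (h x')) (vsub (vadd u d) (vadd u' d'))).

Definition exo_ok m (s : vec m -> vec m) :=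
  loclip1 s /\ (forall k, s (@vzero m) k = 0) /\
  (forall w w', dot (vsub w w') (vsub (s w) (s w')) <= 0).

(* passive edge system  eta' = psi(eta, rho), v = phi(eta, rho) *)
Definition passive_edge p q (psi : vec p -> vec q -> vec p) (phi : vec p -> vec q -> vec q) :=
  loclip2 psi /\ cont_map2 phi /\
  exists (Psi : vec p -> R) (G : vec p -> vec p),
    is_C1_grad Psi G /\ Psi (@vzero p) = 0 /\
    (forall e, (exists k, e k <> 0) -> 0 < Psi e) /\
    (forall e r, dot (G e) (psi e r) <= dot (phi e r) r).

(* the E edges of the complete graph on N nodes, each unordered pair exactly once,
   with an (arbitrary) orientation ends g = (i, j) *)
Definition complete_edges N E (ends : 'I_E -> 'I_N * 'I_N) :=
  (forall g, (ends g).1 <> (ends g).2) /\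
  (forall i j : 'I_N, i <> j -> exists g, ends g = (i, j) \/ ends g = (j, i)) /\
  (forall g g', ends g = ends g' \/ ends g = ((ends g').2, (ends g').1) -> g = g').

Definition adjw N (a : R) (i j : 'I_N) : R := if i == j then 0 else a.
Definition incid N E (a : R) (ends : 'I_E -> 'I_N * 'I_N) (i : 'I_N) (g : 'I_E) : R :=
  if i == (ends g).1 then - sqrt a else if i == (ends g).2 then sqrt a else 0.

Definition has_deriv n (z : R -> vec n) (t : R) (v : vec n) :=
  forall k, derivable_pt_lim (fun s => z s k) t (v k).

(* Main.v *)
Require Import Defs.
From HB Require Import structures.
From mathcomp Require Import all_boot.
From Stdlib Require Import Reals Lra Lia FunctionalExtensionality Classical.
Open Scope R_scope.
Set Implicit Arguments. Unset Strict Implicit.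

HB.instance Definition _ := Monoid.isComLaw.Build R R0 Rplus
  (fun a b c => esym (Rplus_assoc a b c)) Rplus_comm Rplus_0_l.

Lemma rsum_le n (F G : 'I_n -> R) : (forall k, F k <= G k) -> rsum F <= rsum G.
Proof.
move=> H; rewrite /rsum; apply: (big_ind2 (fun a b => a <= b)) => //; first lra.
move=> *; lra.
Qed.

Lemma rsum_ge0 n (F : 'I_n -> R) : (forall k, 0 <= F k) -> 0 <= rsum F.
Proof.
move=> H; rewrite /rsum; apply: (big_ind (fun a => 0 <= a)) => //; first lra.
move=> *; lra.
Qed.

Lemma rsum_abs n (F : 'I_n -> R) : Rabs (rsum F) <= rsum (fun k => Rabs (F k)).
Proof.
rewrite /rsum; apply: (big_ind2 (fun a b => Rabs a <= b)).
- rewrite Rabs_R0; lra.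
- move=> a b c e H1 H2; apply: Rle_trans (Rabs_triang _ _) _; lra.
- move=> i _; lra.
Qed.

Lemma rsum_ext n (F G : 'I_n -> R) : (forall k, F k = G k) -> rsum F = rsum G.
Proof. by move=> H; apply: eq_bigr => k _. Qed.

Lemma rsum_split n (F G : 'I_n -> R) :
  rsum (fun k => F k + G k) = rsum F + rsum G.
Proof. by rewrite /rsum big_split. Qed.

Lemma rsum_scal n c (F : 'I_n -> R) : rsum (fun k => c * F k) = c * rsum F.
Proof.
rewrite /rsum; apply: (big_ind2 (fun a b => a = c * b)) => //; first lra.
move=> a b e f -> ->; lra.
Qed.

Lemma rsum_const n c : rsum (fun _ : 'I_n => c) = INR n * c.
Proof.
rewrite /rsum big_const_ord; elim: n => [|n IH]; first by rewrite /=; lra.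
rewrite S_INR /= IH; lra.
Qed.

Lemma rsum_single n (F : 'I_n -> R) k0 : (forall k, 0 <= F k) -> F k0 <= rsum F.
Proof.
move=> H; rewrite /rsum (bigD1 k0) //=.
have : 0 <= \big[Rplus/R0]_(i < n | i != k0) F i.
  apply: (big_ind (fun a => 0 <= a)) => //; first lra; move=> *; lra.
move=> h; have := Rplus_le_compat_l (F k0) _ _ h; rewrite Rplus_0_r; exact.
Qed.

Lemma rsum_delta n (k0 : 'I_n) c :
  rsum (fun k => if k == k0 then c else 0) = c.
Proof.
rewrite /rsum (bigD1 k0) //= eqxx big1; first lra.
by move=> k /negbTE ->.
Qed.

Definition norm1 n (v : vec n) := rsum (fun k => Rabs (v k)).

Lemma norm1_ge0 n (v : vec n) : 0 <= norm1 v.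
Proof. apply: rsum_ge0 => k; exact: Rabs_pos. Qed.

Lemma dot_ge0 n (v : vec n) : 0 <= dot v v.
Proof. apply: rsum_ge0 => k; nra. Qed.

Lemma vnorm_ge0 n (v : vec n) : 0 <= vnorm v.
Proof. exact: sqrt_pos. Qed.

Lemma abs_le_vnorm n (v : vec n) k : Rabs (v k) <= vnorm v.
Proof.
rewrite /vnorm -sqrt_Rsqr_abs; apply: sqrt_le_1_alt.
rewrite /Rsqr /dot; apply: (@rsum_single _ (fun k => v k * v k) k) => l; nra.
Qed.

Lemma abs_le_norm1 n (v : vec n) k : Rabs (v k) <= norm1 v.
Proof. apply: (@rsum_single _ (fun k => Rabs (v k)) k) => l; exact: Rabs_pos. Qed.

Lemma vnorm_le_norm1 n (v : vec n) : vnorm v <= norm1 v.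
Proof.
rewrite /vnorm -(sqrt_square (norm1 v)); last exact: norm1_ge0.
apply: sqrt_le_1_alt.
apply: (@Rle_trans _ (rsum (fun k => norm1 v * Rabs (v k)))).
  apply: rsum_le => k.
  have h1 := abs_le_norm1 v k; have h2 := Rabs_pos (v k).
  have -> : v k * v k = Rabs (v k) * Rabs (v k).
    by rewrite -Rabs_mult Rabs_right //; nra.
  nra.
rewrite rsum_scal; right; reflexivity.
Qed.

Lemma norm1_small n (v : vec n) r : (forall k, Rabs (v k) <= r) -> norm1 v <= INR n * r.
Proof. move=> H; rewrite -rsum_const; exact: rsum_le. Qed.

Lemma vnorm_small n (v : vec n) r : (forall k, Rabs (v k) <= r) -> vnorm v <= INR n * r.
Proof. move=> H; apply: Rle_trans (vnorm_le_norm1 v) (norm1_small H). Qed.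

Lemma vnorm_zero n (v : vec n) : (forall k, v k = 0) -> vnorm v = 0.
Proof.
move=> H; rewrite /vnorm /dot (rsum_ext (G := fun _ => 0)).
  by rewrite rsum_const Rmult_0_r sqrt_0.
by move=> k; rewrite H; lra.
Qed.

Lemma derive_rsum n (F : 'I_n -> R -> R) (F' : 'I_n -> R) t :
  (forall k, derivable_pt_lim (F k) t (F' k)) ->
  derivable_pt_lim (fun s => rsum (fun k => F k s)) t (rsum F').
Proof.
move=> H; rewrite /rsum; elim: (index_enum _) => [|k r IH].
  have -> : (fun s => \big[Rplus/R0]_(k <- [::]) F k s) = fun _ => 0.
    by apply: functional_extensionality => s; rewrite big_nil.
  rewrite big_nil; exact: derivable_pt_lim_const.
have -> : (fun s => \big[Rplus/R0]_(k0 <- k :: r) F k0 s) =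
   fun s => F k s + \big[Rplus/R0]_(k0 <- r) F k0 s.
  by apply: functional_extensionality => s; rewrite big_cons.
rewrite big_cons; exact: derivable_pt_lim_plus.
Qed.
Lemma mvt_seg (F F' : R -> R) t t' L :
  (forall c, Rmin t t' <= c <= Rmax t t' -> derivable_pt_lim F c (F' c) /\ Rabs (F' c) <= L) ->
  Rabs (F t - F t') <= L * Rabs (t - t').
Proof.
move=> H; case: (Rtotal_order t t') => [Hlt|[Heq|Hgt]].
- have [c [Hc Hc2]] : exists c, F t' - F t = F' c * (t' - t) /\ t < c < t'.
    apply: MVT_cor2 => // c hc; apply: (proj1 (H c _)).
    rewrite Rmin_left ?Rmax_right; lra.
  have [_ HL] := H c ltac:(rewrite Rmin_left ?Rmax_right; lra).
  rewrite Rabs_minus_sym Hc Rabs_mult (Rabs_minus_sym t) (Rabs_right (t' - t)); last lra.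
  apply: Rmult_le_compat_r => //; lra.
- subst; rewrite !Rminus_diag Rabs_R0.
  have [_ HL] := H t' ltac:(rewrite Rmin_left ?Rmax_right; lra).
  have := Rabs_pos (F' t'); nra.
- have [c [Hc Hc2]] : exists c, F t - F t' = F' c * (t - t') /\ t' < c < t.
    apply: MVT_cor2 => // c hc; apply: (proj1 (H c _)).
    rewrite Rmin_right ?Rmax_left; lra.
  have [_ HL] := H c ltac:(rewrite Rmin_right ?Rmax_left; lra).
  rewrite Hc Rabs_mult (Rabs_right (t - t')); last lra.
  apply: Rmult_le_compat_r => //; lra.
Qed.

Lemma mvt_lower (F F' : R -> R) t t' m : t <= t' ->
  (forall c, t <= c <= t' -> derivable_pt_lim F c (F' c) /\ m <= F' c) ->
  m * (t' - t) <= F t' - F t.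
Proof.
move=> Htt H; case: (Rle_lt_or_eq_dec _ _ Htt) => [Hlt|Heq].
- have [c [Hc Hc2]] : exists c, F t' - F t = F' c * (t' - t) /\ t < c < t'.
    apply: MVT_cor2 => // c hc; apply: (proj1 (H c _)); lra.
  have [_ Hm] := H c ltac:(lra).
  rewrite Hc; apply: Rmult_le_compat_r; lra.
- subst; rewrite !Rminus_diag; lra.
Qed.

Lemma mvt_upper (F F' : R -> R) t t' m : t <= t' ->
  (forall c, t <= c <= t' -> derivable_pt_lim F c (F' c) /\ F' c <= m) ->
  F t' - F t <= m * (t' - t).
Proof.
move=> Htt H; case: (Rle_lt_or_eq_dec _ _ Htt) => [Hlt|Heq].
- have [c [Hc Hc2]] : exists c, F t' - F t = F' c * (t' - t) /\ t < c < t'.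
    apply: MVT_cor2 => // c hc; apply: (proj1 (H c _)); lra.
  have [_ Hm] := H c ltac:(lra).
  rewrite Hc; apply: Rmult_le_compat_r; lra.
- subst; rewrite !Rminus_diag; lra.
Qed.

Lemma fin_bound (I : finType) (P : I -> R -> Prop) :
  (forall i B B', P i B -> B <= B' -> P i B') -> (forall i, exists B, P i B) ->
  exists B, 0 <= B /\ forall i, P i B.
Proof.
move=> Hmon H.
suff [B [HB0 HB]] : exists B, 0 <= B /\ forall i, i \in enum I -> P i B.
  by exists B; split => // i; apply: HB; rewrite mem_enum.
elim: (enum I) => [|a s [B [HB0 HB]]].
  by exists 0; split; [lra | move=> i].
have [Ba HBa] := H a.
exists (Rmax B Ba); split; first by apply: Rle_trans HB0 (Rmax_l _ _).
move=> i; rewrite in_cons => /orP [/eqP -> | Hi].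
  by apply: Hmon HBa (Rmax_r _ _).
by apply: Hmon (HB i Hi) (Rmax_l _ _).
Qed.

Lemma interval_induction (P : R -> R -> Prop) :
  (forall t, exists r, 0 < r /\ P (t - r) (t + r)) ->
  (forall a b a' b', P a b -> a <= a' -> b' <= b -> P a' b') ->
  (forall a c b, P a c -> P c b -> P a b) ->
  forall a b, a <= b -> P a b.
Proof.
move=> Hloc Hsub Hun a b Hab.
pose S t := a <= t <= b /\ P a t.
have Sa : S a.
  split; first lra.
  have [r [Hr Hp]] := Hloc a; apply: Hsub Hp _ _; lra.
have [m Hm] : {m | is_lub S m}.
  apply: completeness; last by exists a.
  by exists b => t [[_ ?] _].
have Ham : a <= m by apply: (proj1 Hm).
have Hmb : m <= b by apply: (proj2 Hm) => t [[_ ?] _].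
have [r [Hr Hpr]] := Hloc m.
have [t [[[Ht1 Ht2] Ht3] Htr]] : exists t, S t /\ m - r < t.
  apply: NNPP => Hn.
  have : m <= m - r; last lra.
  apply: (proj2 Hm) => t St.
  case: (Rle_lt_dec t (m - r)) => // Hlt; exfalso; apply: Hn; by exists t.
have Htm : t <= m by apply: (proj1 Hm); split => //; split => //.
pose b' := Rmin (m + r / 2) b.
have Hb'1 : b' <= m + r / 2 by apply: Rmin_l.
have Hb'2 : b' <= b by apply: Rmin_r.
have Pab' : P a b'.
  apply: (Hun a t b' Ht3); apply: Hsub Hpr _ _; lra.
have Sb' : S b'.
  split => //; split => //.
  rewrite /b' /Rmin; case: Rle_dec => _; lra.
have : b' <= m by apply: (proj1 Hm).
move=> Hle.
have Hbb : b' = b.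
  move: Hle; rewrite /b' /Rmin; case: Rle_dec => Hc Hle; lra.
by rewrite -Hbb.
Qed.

Lemma Rabs_le_b x y : Rabs x <= y -> - y <= x <= y.
Proof.
move=> H; have h1 := Rle_abs x; have h2 := Rle_abs (- x); rewrite Rabs_Ropp in h2; lra.
Qed.

Lemma Rabs_lt_i x y : - y < x < y -> Rabs x < y.
Proof. move=> H; apply: Rabs_def1; lra. Qed.

Definition fupd (I : eqType) (f : I -> R) (i : I) c := fun j => if j == i then c else f j.

Ltac fupd_tac := rewrite /fupd;
  repeat (case: eqP => [?|?]; try subst); try lra;
  try (match goal with H : is_true (?x != ?x) |- _ => by rewrite eqxx in H end);
  try congruence.

Lemma box_ind_aux (I : finType) (s : seq I) :
  forall Good : (I -> R) -> (I -> R) -> Prop,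
  (forall lo hi lo' hi', Good lo hi -> (forall i, lo i <= lo' i) ->
     (forall i, hi' i <= hi i) -> Good lo' hi') ->
  (forall lo hi i c, Good lo (fupd hi i c) -> Good (fupd lo i c) hi -> Good lo hi) ->
  (forall x, exists r, 0 < r /\ Good (fun i => x i - r) (fun i => x i + r)) ->
  forall lo hi, (forall i, i \notin s -> lo i = hi i) -> Good lo hi.
Proof.
elim: s => [|i0 s IH] Good Hsub Hun Hloc lo hi Hdeg.
  have [r [Hr G]] := Hloc lo; apply: (Hsub _ _ _ _ G) => i; first lra.
  rewrite -(Hdeg i) //; lra.
have HQ : forall t, exists r, 0 < r /\ Good (fupd lo i0 (t - r)) (fupd hi i0 (t + r)).
  move=> t.
  pose Q lo' hi' := exists r, 0 < r /\ Good (fupd lo' i0 (t - r)) (fupd hi' i0 (t + r)).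
  have : Q (fupd lo i0 t) (fupd hi i0 t).
    apply: (IH Q).
    - move=> l h l' h' [r [Hr G]] Hl Hh; exists r; split => //.
      apply: (Hsub _ _ _ _ G) => j; rewrite /fupd; case: (j == i0); [lra|apply: Hl|lra|apply: Hh].
    - move=> l h i c [r1 [Hr1 G1]] [r2 [Hr2 G2]].
      have Hm1 := Rmin_l r1 r2; have Hm2 := Rmin_r r1 r2.
      exists (Rmin r1 r2); split; first by apply: Rmin_pos.
      case: (eqVneq i i0) => [Hi|Hi].
      + subst i; apply: (Hsub _ _ _ _ G1) => j; fupd_tac.
      + apply: (Hun _ _ i c).
        * apply: (Hsub _ _ _ _ G1) => j; fupd_tac.
        * apply: (Hsub _ _ _ _ G2) => j; fupd_tac.
    - move=> x; have [r [Hr G]] := Hloc (fupd x i0 t).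
      exists (r / 2); split; first lra; exists (r / 2); split; first lra.
      apply: (Hsub _ _ _ _ G) => j; fupd_tac.
    - move=> j Hj; rewrite /fupd; case: eqP => // Hne; apply: Hdeg.
      by rewrite in_cons negb_or Hj andbT; apply/eqP.
  move=> [r [Hr G]]; exists r; split => //; apply: (Hsub _ _ _ _ G) => j; fupd_tac.
pose P a b := Good (fupd lo i0 a) (fupd hi i0 b).
have HP : forall a b, a <= b -> P a b.
  apply: interval_induction.
  - exact HQ.
  - move=> a b a' b' G ha hb; apply: (Hsub _ _ _ _ G) => j; fupd_tac.
  - move=> a c b G1 G2; apply: (Hun _ _ i0 c).
    + apply: (Hsub _ _ _ _ G1) => j; fupd_tac.
    + apply: (Hsub _ _ _ _ G2) => j; fupd_tac.
case: (Rle_lt_dec (lo i0) (hi i0)) => Hle.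
- have G := HP _ _ Hle; apply: (Hsub _ _ _ _ G) => j; fupd_tac.
- have G := HP (hi i0) (hi i0) (Rle_refl _); apply: (Hsub _ _ _ _ G) => j; fupd_tac.
Qed.

Definition locbd (I : finType) (K : (I -> R) -> R) :=
  forall x0, exists r B, 0 < r /\ forall x, (forall i, Rabs (x i - x0 i) < r) -> K x <= B.

Lemma box_bound (I : finType) (K : (I -> R) -> R) : locbd K ->
  forall M, exists B, 0 <= B /\ forall x, (forall i, Rabs (x i) <= M) -> K x <= B.
Proof.
move=> HK M.
pose Good (lo hi : I -> R) := exists B, forall x, (forall i, lo i <= x i <= hi i) -> K x <= B.
have G : forall lo hi, Good lo hi.
  move=> lo hi; apply: (@box_ind_aux I (enum I) Good); last first.
    by move=> i; rewrite mem_enum.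
  - move=> x; have [r [B [Hr HB]]] := HK x; exists (r / 2); split; first lra.
    exists B => z Hz; apply: HB => i; have := Hz i => ?; apply: Rabs_lt_i; lra.
  - move=> lo1 hi1 i c [B1 H1] [B2 H2]; exists (Rmax B1 B2) => x Hx.
    case: (Rle_lt_dec (x i) c) => Hc.
    + apply: Rle_trans (Rmax_l _ _); apply: H1 => j; have := Hx j; fupd_tac.
    + apply: Rle_trans (Rmax_r _ _); apply: H2 => j; have := Hx j; fupd_tac.
  - move=> lo1 hi1 lo' hi' [B HB] Hl Hh; exists B => x Hx; apply: HB => i.
    have := Hx i; have := Hl i; have := Hh i; lra.
have [B HB] := G (fun _ => - M) (fun _ => M).
exists (Rmax B 0); split; first exact: Rmax_r.
move=> x Hx; apply: Rle_trans (Rmax_l _ _); apply: HB => i.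
exact: Rabs_le_b.
Qed.

Definition box n (M : R) (x : vec n) := forall i, Rabs (x i) <= M.

Lemma close_vnorm n (x x0 : vec n) r : (forall i, Rabs (x i - x0 i) < r) ->
  vnorm (vsub x x0) <= INR n * r.
Proof. move=> H; apply: vnorm_small => k; rewrite /vsub; apply: Rlt_le; exact: H. Qed.

Lemma small_r n dl : 0 < dl -> exists r, 0 < r /\ INR n * r < dl.
Proof.
move=> Hdl; have Hn := pos_INR n.
exists (dl / (INR n + 1)); split.
  apply: Rdiv_lt_0_compat; lra.
have -> : INR n * (dl / (INR n + 1)) = dl * (INR n / (INR n + 1)) by field; lra.
have : INR n / (INR n + 1) < 1.
  apply: (Rmult_lt_reg_r (INR n + 1)); first lra.
  rewrite /Rdiv Rmult_assoc Rinv_l; lra.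
nra.
Qed.

Lemma coord_close n (u v : vec n) k : Rabs (u k) <= Rabs (v k) + vnorm (vsub u v).
Proof.
have := abs_le_vnorm (vsub u v) k; rewrite /vsub => h.
have := Rabs_triang (v k) (u k - v k).
have -> : v k + (u k - v k) = u k by ring.
lra.
Qed.

Lemma vupd_same n (y : vec n) k c s : vupd (vupd y k c) k s = vupd y k s.
Proof. by apply: functional_extensionality => j; rewrite /vupd; case: (j == k). Qed.

Lemma vupd_at n (y : vec n) k c : vupd y k c k = c.
Proof. by rewrite /vupd eqxx. Qed.

Lemma grad_lip n (F : vec n -> R) (G : vec n -> vec n) M B :
  (forall x k, derivable_pt_lim (fun s => F (vupd x k s)) (x k) (G x k)) ->
  (forall x k, box M x -> Rabs (G x k) <= B) ->
  forall x x', box M x -> box M x' -> Rabs (F x - F x') <= B * norm1 (vsub x x').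
Proof.
move=> HD HG x x' Hx Hx'.
pose z (m : nat) : vec n := fun k => if leq k.+1 m then x' k else x k.
pose S (m : nat) := rsum (fun k : 'I_n => if leq k.+1 m then Rabs (x k - x' k) else 0).
have Hz : forall m, leq m n -> Rabs (F x - F (z m)) <= B * S m.
  elim => [|m IH] Hm.
    have -> : z 0%nat = x by apply: functional_extensionality => k.
    have -> : S 0%nat = 0.
      by rewrite /S (rsum_ext (G := fun _ => 0)) ?rsum_const //; lra.
    rewrite Rminus_diag Rabs_R0; lra.
  have Hmn : leq m.+1 n by [].
  pose km := Ordinal Hmn.
  have Hk : forall k : 'I_n, k != km -> leq k.+1 m.+1 = leq k.+1 m.
    move=> k Hne; rewrite ltnS leq_eqVlt.
    suff -> : (nat_of_ord k == m) = false by [].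
    apply/negbTE; apply: contra Hne => /eqP E; apply/eqP; exact: val_inj.
  have Hzm : z m.+1 = vupd (z m) km (x' km).
    apply: functional_extensionality => k; rewrite /z /vupd.
    case E: (k == km); last by rewrite Hk ?E.
    by move/eqP: E => ->; rewrite /= ltnSn.
  have Hzm0 : F (z m) = F (vupd (z m) km (x km)).
    f_equal; apply: functional_extensionality => k; rewrite /z /vupd.
    case E: (k == km) => //; move/eqP: E => -> /=; by rewrite ltnn.
  have HS : S m.+1 = S m + Rabs (x km - x' km).
    rewrite /S -(rsum_delta km (Rabs (x km - x' km))) -rsum_split.
    apply: rsum_ext => k; case E: (k == km).
      by move/eqP: E => -> /=; rewrite ltnSn ltnn; lra.
    by rewrite Hk ?E //; lra.
  have Hseg : Rabs (F (vupd (z m) km (x km)) - F (vupd (z m) km (x' km)))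
              <= B * Rabs (x km - x' km).
    apply: (mvt_seg (F := fun s => F (vupd (z m) km s))
                    (F' := fun c => G (vupd (z m) km c) km)) => c Hc; split.
      have := HD (vupd (z m) km c) km; rewrite vupd_at.
      have -> : (fun s => F (vupd (vupd (z m) km c) km s)) = (fun s => F (vupd (z m) km s)).
        by apply: functional_extensionality => s; rewrite vupd_same.
      done.
    apply: HG => i; rewrite /vupd; case: (i == km).
      have := Rabs_le_b (Hx km); have := Rabs_le_b (Hx' km).
      have := Rmin_l (x km) (x' km); have := Rmin_r (x km) (x' km).
      have := Rmax_l (x km) (x' km); have := Rmax_r (x km) (x' km).
      have := Rmin_glb (x km) (x' km) (- M); have := Rmax_lub (x km) (x' km) M.
      move=> *; apply: Rabs_le; lra.
    rewrite /z; case: leq; [exact: Hx' | exact: Hx].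
  have IH' := IH (ltnW Hm).
  rewrite -Hzm -Hzm0 in Hseg.
  have := Rabs_triang (F x - F (z m)) (F (z m) - F (z m.+1)).
  have -> : F x - F (z m) + (F (z m) - F (z m.+1)) = F x - F (z m.+1) by ring.
  rewrite HS; lra.
have := Hz n (leqnn n).
have -> : z n = x' by apply: functional_extensionality => k; rewrite /z ltn_ord.
have -> : S n = norm1 (vsub x x') by apply: rsum_ext => k; rewrite ltn_ord.
done.
Qed.

Lemma cont_locbd n m (F : vec n -> vec m) k : cont_map F -> locbd (fun x => Rabs (F x k)).
Proof.
move=> HF x0; have [dl [Hdl HD]] := HF x0 1 Rlt_0_1.
have [r [Hr Hr2]] := small_r n Hdl.
exists r, (Rabs (F x0 k) + 1); split => // x Hx.
have := HD x ltac:(have := close_vnorm Hx; lra).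
have := coord_close (F x) (F x0) k; lra.
Qed.

Lemma C1_lip n q (h : vec n -> vec q) : C1map h -> forall M,
  exists L, 0 <= L /\ forall j x x', box M x -> box M x' ->
    Rabs (h x j - h x' j) <= L * norm1 (vsub x x').
Proof.
move=> Hh M.
apply: fin_bound.
  move=> j B B' H HB x x' Hx Hx'; apply: Rle_trans (H x x' Hx Hx') _.
  apply: Rmult_le_compat_r => //; exact: norm1_ge0.
move=> j; have [G [HD HG]] := Hh j.
have [B [HB0 HB]] : exists B, 0 <= B /\ forall k, forall x, box M x -> Rabs (G x k) <= B.
  apply: fin_bound.
    move=> k B B' H HB x Hx; apply: Rle_trans (H x Hx) HB.
  move=> k; have [B [_ HB]] := box_bound (cont_locbd k HG) M; by exists B.
exists B => x x' Hx Hx'.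
apply: (grad_lip (F := fun x => h x j) (G := G)) => // x0 k Hx0; exact: HB.
Qed.

Lemma box_mon n M M' (x : vec n) : box M x -> M <= M' -> box M' x.
Proof. move=> H HM i; have := H i; lra. Qed.

Lemma vnorm_self n (x : vec n) : vnorm (vsub x x) = 0.
Proof. apply: vnorm_zero => k; rewrite /vsub; ring. Qed.

Lemma phi_bound p q (F : vec p -> vec q -> vec q) : cont_map2 F -> forall M,
  exists B, 0 <= B /\ forall e r k, box M e -> box M r -> Rabs (F e r k) <= B.
Proof.
move=> HF M.
have [B [HB0 HB]] : exists B, 0 <= B /\ forall k e r, box M e -> box M r -> Rabs (F e r k) <= B.
  apply: fin_bound.
    move=> k B B' H HB e r He Hr; apply: Rle_trans (H e r He Hr) HB.
  move=> k.
  pose K (z : ('I_p + 'I_q)%type -> R) :=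
    Rabs (F (fun i => z (inl i)) (fun i => z (inr i)) k).
  have HK : locbd K.
    move=> z0; have [dl [Hdl HD]] := HF (fun i => z0 (inl i)) (fun i => z0 (inr i)) 1 Rlt_0_1.
    have [r [Hr Hr2]] := small_r (p + q) Hdl.
    exists r, (Rabs (F (fun i => z0 (inl i)) (fun i => z0 (inr i)) k) + 1); split => // z Hz.
    have H1 := close_vnorm (x := fun i => z (inl i)) (x0 := fun i => z0 (inl i)) (fun i => Hz (inl i)).
    have H2 := close_vnorm (x := fun i => z (inr i)) (x0 := fun i => z0 (inr i)) (fun i => Hz (inr i)).
    rewrite plus_INR in Hr2.
    have := HD (fun i => z (inl i)) (fun i => z (inr i)) ltac:(lra).
    have := coord_close (F (fun i => z (inl i)) (fun i => z (inr i)))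
                        (F (fun i => z0 (inl i)) (fun i => z0 (inr i))) k.
    rewrite /K => h1 h2; apply: (Rle_trans _ _ _ h1); apply: Rplus_le_compat_l; apply: Rlt_le; exact: h2.
  have [B [_ HB]] := box_bound HK M.
  exists B => e r He Hr.
  apply: (HB (fun c => match c with inl i => e i | inr i => r i end)).
  by case.
by exists B; split => // e r k; apply: HB.
Qed.

Lemma f_bound n q (F : vec n -> vec q -> vec q -> vec n) : loclip3 F -> forall M,
  exists B, 0 <= B /\ forall x u d k, box M x -> box M u -> box M d -> Rabs (F x u d k) <= B.
Proof.
move=> HF M.
have [B [HB0 HB]] : exists B, 0 <= B /\
    forall k x u d, box M x -> box M u -> box M d -> Rabs (F x u d k) <= B.
  apply: fin_bound.
    move=> k B B' H HB x u d Hx Hu Hd; apply: Rle_trans (H x u d Hx Hu Hd) HB.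
  move=> k.
  pose K (z : ('I_n + 'I_q + 'I_q)%type -> R) :=
    Rabs (F (fun i => z (inl (inl i))) (fun i => z (inl (inr i))) (fun i => z (inr i)) k).
  have HK : locbd K.
    move=> z0.
    have [rad [L [Hrad HL]]] :=
      HF (fun i => z0 (inl (inl i))) (fun i => z0 (inl (inr i))) (fun i => z0 (inr i)).
    have [r [Hr Hr2]] := small_r (n + q + q) Hrad.
    exists r, (Rabs (F (fun i => z0 (inl (inl i))) (fun i => z0 (inl (inr i)))
                   (fun i => z0 (inr i)) k) + Rabs L * rad); split => // z Hz.
    have H1 := close_vnorm (x := fun i => z (inl (inl i))) (x0 := fun i => z0 (inl (inl i)))
                 (fun i => Hz (inl (inl i))).
    have H2 := close_vnorm (x := fun i => z (inl (inr i))) (x0 := fun i => z0 (inl (inr i)))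
                 (fun i => Hz (inl (inr i))).
    have H3 := close_vnorm (x := fun i => z (inr i)) (x0 := fun i => z0 (inr i))
                 (fun i => Hz (inr i)).
    rewrite !plus_INR in Hr2.
    have Hs0 := vnorm_ge0 (vsub (fun i => z (inl (inl i))) (fun i => z0 (inl (inl i)))).
    have Hs1 := vnorm_ge0 (vsub (fun i => z (inl (inr i))) (fun i => z0 (inl (inr i)))).
    have Hs2 := vnorm_ge0 (vsub (fun i => z (inr i)) (fun i => z0 (inr i))).
    have := HL (fun i => z (inl (inl i))) (fun i => z (inl (inr i))) (fun i => z (inr i))
               (fun i => z0 (inl (inl i))) (fun i => z0 (inl (inr i))) (fun i => z0 (inr i))
               ltac:(lra) ltac:(rewrite !vnorm_self; lra).
    have := coord_close (F (fun i => z (inl (inl i))) (fun i => z (inl (inr i))) (fun i => z (inr i)))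
                        (F (fun i => z0 (inl (inl i))) (fun i => z0 (inl (inr i))) (fun i => z0 (inr i))) k.
    have HLa := Rle_abs L.
    set s := vnorm _ + _ + _.
    have Hs : 0 <= s <= rad by rewrite /s; lra.
    have : L * s <= Rabs L * rad.
      apply: Rle_trans (_ : Rabs L * s <= _); first nra.
      apply: Rmult_le_compat_l; [exact: Rabs_pos | lra].
    rewrite /K => h3 h1 h2; apply: (Rle_trans _ _ _ h1); apply: Rplus_le_compat_l; exact: (Rle_trans _ _ _ h2 h3).
  have [B [_ HB]] := box_bound HK M.
  exists B => x u d Hx Hu Hd.
  apply: (HB (fun c => match c with inl (inl i) => x i | inl (inr i) => u i | inr i => d i end)).
  by case => [[]|].
by exists B; split => // x u d k; apply: HB.
Qed.

Lemma abs_mul_le a b A B : Rabs a <= A -> Rabs b <= B -> Rabs (a * b) <= A * B.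
Proof.
move=> h1 h2; rewrite Rabs_mult; apply: Rmult_le_compat => //; exact: Rabs_pos.
Qed.

Lemma abs_sub2 A B : Rabs (- A - B) <= Rabs A + Rabs B.
Proof.
have := Rabs_triang (- A) (- B); rewrite !Rabs_Ropp.
have -> : - A + - B = - A - B by ring. done.
Qed.

Lemma rsum_sub n (F G : 'I_n -> R) : rsum F - rsum G = rsum (fun k => F k - G k).
Proof.
rewrite [RHS](rsum_ext (G := fun k => F k + (-1) * G k)); last by move=> k; ring.
rewrite rsum_split rsum_scal; ring.
Qed.

Lemma matvec_bd q0 m0 (A : 'I_q0 -> 'I_m0 -> R) (v : vec m0) c k :
  box c v -> Rabs (matvec A v k) <= rsum (fun l => Rabs (A k l)) * c.
Proof.
move=> Hv; rewrite /matvec Rmult_comm -rsum_scal.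
apply: Rle_trans (rsum_abs _) _; apply: rsum_le => l.
rewrite [c * _]Rmult_comm; apply: abs_mul_le; [lra | exact: Hv].
Qed.

Lemma incid_abs N0 E0 a0 (ends0 : 'I_E0 -> 'I_N0 * 'I_N0) l g :
  0 <= a0 -> Rabs (incid a0 ends0 l g) <= sqrt a0.
Proof.
move=> Ha; have Hs := sqrt_pos a0; rewrite /incid; case: eqP => _.
  rewrite Rabs_Ropp Rabs_right; lra.
case: eqP => _; first by rewrite Rabs_right; lra.
rewrite Rabs_R0; lra.
Qed.

Lemma incid_sum N0 E0 a0 (ends0 : 'I_E0 -> 'I_N0 * 'I_N0) g (i0 j0 : 'I_N0) (Y : 'I_N0 -> R) :
  ends0 g = (i0, j0) -> i0 <> j0 ->
  rsum (fun l => incid a0 ends0 l g * Y l) = sqrt a0 * (Y j0 - Y i0).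
Proof.
move=> He Hne.
rewrite (rsum_ext (G := fun l => (if l == i0 then - sqrt a0 * Y i0 else 0) +
                                 (if l == j0 then sqrt a0 * Y j0 else 0))).
  by rewrite rsum_split !rsum_delta; ring.
move=> l; rewrite /incid He /=.
case: eqP => [E1|E1]; case: eqP => [E2|E2]; subst; try congruence; ring.
Qed.

Lemma abs_sub_le a0 b0 : Rabs (a0 - b0) <= Rabs a0 + Rabs b0.
Proof. have := Rabs_triang a0 (- b0); rewrite Rabs_Ropp; rewrite /Rminus; lra. Qed.

Unset Implicit Arguments.
Set Strict Implicit.
Theorem corollary2
  (n q N E : nat) (m : 'I_N -> nat) (p : 'I_E -> nat)
  (f : vec n -> vec q -> vec q -> vec n) (h : vec n -> vec q) (sigma : R)
  (s : forall i : 'I_N, vec (m i) -> vec (m i))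
  (Rm : forall i : 'I_N, 'I_q -> 'I_(m i) -> R)
  (a : R) (ends : 'I_E -> 'I_N * 'I_N)
  (psi : forall g : 'I_E, vec (p g) -> vec q -> vec (p g))
  (phi : forall g : 'I_E, vec (p g) -> vec q -> vec q)
  (delta : 'I_E -> R)
  (x : 'I_N -> R -> vec n) (w : forall i : 'I_N, R -> vec (m i))
  (eta : forall g : 'I_E, R -> vec (p g)) (xi : forall i : 'I_N, R -> vec (m i))
  (kappa : 'I_E -> R -> R) :
  loclip3 f -> C1map h -> iOFP f h sigma ->
  (forall i, exo_ok (s i)) ->
  0 < a -> complete_edges ends ->
  (forall g, passive_edge (psi g) (phi g)) ->
  (forall g, 0 < delta g) ->
  let y i t := h (x i t) in
  let d i t := matvec (Rm i) (w i t) in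
  let rho i t : vec q := fun k => rsum (fun j => adjw a i j * (y j t k - y i t k)) in
  let vr g t : vec q := fun k => rsum (fun j => incid a ends j g * y j t k) in
  let v1 g t := phi g (eta g t) (vr g t) in
  let v2 g t : vec q := fun k => kappa g t * vr g t k in
  let u i t : vec q := fun k =>
      - matvec (Rm i) (xi i t) k - rsum (fun g => incid a ends i g * (v1 g t k + v2 g t k)) in
  (forall i t, 0 < t -> has_deriv (w i) t (s i (w i t))) ->
  (forall i t, 0 < t -> has_deriv (x i) t (f (x i t) (u i t) (d i t))) ->
  (forall g t, 0 < t -> has_deriv (eta g) t (psi g (eta g t) (vr g t))) ->
  (forall i t, 0 < t -> has_deriv (xi i) t (vsub (s i (xi i t)) (matTvec (Rm i) (rho i t)))) ->
  (forall g t, 0 < t -> derivable_pt_lim (kappa g) t (delta g * dot (vr g t) (vr g t))) ->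
  (exists M, forall t, 0 < t ->
     (forall i, vnorm (x i t) <= M /\ vnorm (xi i t) <= M) /\
     (forall g, vnorm (eta g t) <= M /\ Rabs (kappa g t) <= M)) ->
  forall i j eps, 0 < eps ->
    exists T, 0 < T /\ forall t, T <= t -> vnorm (vsub (y i t) (y j t)) < eps.
Proof.
move=> Hf Hh Hiofp Hexo Ha Hedges Hpass Hdelta y d rho vr v1 v2 u
       Hw Hx Heta Hxi Hkappa [M HM] i j eps Heps.
have Hxb : forall l t, 1 <= t -> box M (x l t).
  move=> l t Ht k; apply: Rle_trans (abs_le_vnorm _ k) _.
  exact: (proj1 ((proj1 (HM t ltac:(lra))) l)).
have Hxib : forall l t, 1 <= t -> box M (xi l t).
  move=> l t Ht k; apply: Rle_trans (abs_le_vnorm _ k) _.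
  exact: (proj2 ((proj1 (HM t ltac:(lra))) l)).
have Hetab : forall g t, 1 <= t -> box M (eta g t).
  move=> g t Ht k; apply: Rle_trans (abs_le_vnorm _ k) _.
  exact: (proj1 ((proj2 (HM t ltac:(lra))) g)).
have Hkb : forall g t, 1 <= t -> Rabs (kappa g t) <= M.
  move=> g t Ht; exact: (proj2 ((proj2 (HM t ltac:(lra))) g)).
have HM0 : 0 <= M.
  apply: Rle_trans (vnorm_ge0 (x i 1)) _; exact: (proj1 ((proj1 (HM 1 Rlt_0_1)) i)).
have Hsa := sqrt_pos a.
have [Bw [HBw0 HBw]] : exists Bw, 0 <= Bw /\ forall l t, 1 <= t -> box Bw (w l t).
  apply: fin_bound.
    move=> l B B' H HB t Ht; apply: box_mon (H t Ht) HB.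
  move=> l; exists (vnorm (w l 1)) => t Ht k.
  apply: Rle_trans (abs_le_vnorm _ k) _.
  apply: sqrt_le_1_alt.
  have [Hsl [Hs0 Hsd]] := Hexo l.
  have := mvt_upper (F := fun tt => dot (w l tt) (w l tt))
                    (F' := fun tt => 2 * dot (w l tt) (s l (w l tt))) (m := 0) Ht.
  move=> H; suff : dot (w l t) (w l t) - dot (w l 1) (w l 1) <= 0 * (t - 1) by lra.
  apply: H => c Hc; split.
    have -> : 2 * dot (w l c) (s l (w l c)) =
       rsum (fun k => s l (w l c) k * w l c k + w l c k * s l (w l c) k).
      rewrite /dot -rsum_scal; apply: rsum_ext => kk; ring.
    apply: derive_rsum => kk.
    apply: derivable_pt_lim_mult; exact: (Hw l c ltac:(lra) kk).
  have := Hsd (w l c) (@vzero (m l)).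
  have -> : dot (vsub (w l c) (@vzero (m l))) (vsub (s l (w l c)) (s l (@vzero (m l)))) =
            dot (w l c) (s l (w l c)).
    apply: rsum_ext => kk; rewrite /vsub Hs0 /vzero; ring.
  lra.
have [Lh [HLh0 HLh]] := C1_lip Hh M.
have [Hy0 [HHy00 HHy0]] : exists B, 0 <= B /\ forall k, Rabs (h (@vzero n) k) <= B.
  apply: fin_bound; first by move=> k B B' H1 H2; lra.
  by move=> k; exists (Rabs (h (@vzero n) k)); lra.
pose By := Hy0 + Lh * (INR n * M).
have HBy0 : 0 <= By.
  rewrite /By; have H1 := Rmult_le_pos _ _ (pos_INR n) HM0; have := Rmult_le_pos _ _ HLh0 H1; lra.
have Hyb : forall l t, 1 <= t -> box By (y l t).
  move=> l t Ht k.
  have H0 : box M (@vzero n) by move=> kk; rewrite /vzero Rabs_R0.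
  have := HLh k (x l t) (@vzero n) (Hxb l t Ht) H0.
  have := norm1_small (v := vsub (x l t) (@vzero n)) (r := M).
  have Hn : forall kk, Rabs (vsub (x l t) (@vzero n) kk) <= M.
    by move=> kk; rewrite /vsub /vzero Rminus_0_r; apply: Hxb.
  move=> /(_ Hn) Hn1 Hl.
  have := Rabs_triang (h (@vzero n) k) (h (x l t) k - h (@vzero n) k).
  have -> : h (@vzero n) k + (h (x l t) k - h (@vzero n) k) = h (x l t) k by ring.
  have := HHy0 k; have := Rmult_le_compat_l Lh _ _ HLh0 Hn1.
  rewrite /By /y; lra.
pose Bv := INR N * (sqrt a * By).
have HBv0 : 0 <= Bv.
  rewrite /Bv; apply: Rmult_le_pos; [exact: pos_INR | exact: Rmult_le_pos].
have Hvrb : forall g t, 1 <= t -> box Bv (vr g t).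
  move=> g t Ht k; rewrite /vr /Bv.
  apply: Rle_trans (rsum_abs _) _; rewrite -rsum_const; apply: rsum_le => l.
  apply: abs_mul_le; [apply: incid_abs; lra | exact: Hyb].
have [Bp [HBp0 HBp]] : exists Bp, 0 <= Bp /\ forall g t k, 1 <= t -> Rabs (v1 g t k) <= Bp.
  apply: fin_bound.
    move=> g B B' H HB t k Ht; apply: Rle_trans (H t k Ht) HB.
  move=> g; have [B [_ HB]] := phi_bound (proj1 (proj2 (Hpass g))) (Rmax M Bv).
  exists B => t k Ht; apply: HB.
    apply: box_mon (Hetab g t Ht) (Rmax_l _ _).
  apply: box_mon (Hvrb g t Ht) (Rmax_r _ _).
have [Rb [HRb0 HRb]] : exists Rb, 0 <= Rb /\ forall l k, rsum (fun c => Rabs (Rm l k c)) <= Rb.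
  apply: fin_bound.
    move=> l B B' H HB k; apply: Rle_trans (H k) HB.
  move=> l; have [B [_ HB]] : exists B, 0 <= B /\ forall k, rsum (fun c => Rabs (Rm l k c)) <= B.
    apply: fin_bound; first by move=> k B B' H1 H2; lra.
    by move=> k; eexists; apply: Rle_refl.
  by exists B.
pose Bu := Rb * M + INR E * (sqrt a * (Bp + M * Bv)).
have Hub : forall l t, 1 <= t -> box Bu (u l t).
  move=> l t Ht k; rewrite /u.
  apply: Rle_trans (abs_sub2 _ _) _; rewrite /Bu; apply: Rplus_le_compat.
    apply: Rle_trans (matvec_bd (Rm l) k (Hxib l t Ht)) _.
    apply: Rmult_le_compat_r => //.
  apply: Rle_trans (rsum_abs _) _; rewrite -rsum_const; apply: rsum_le => g.
  apply: abs_mul_le; first by apply: incid_abs; lra.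
  apply: Rle_trans (Rabs_triang _ _) _; apply: Rplus_le_compat; first exact: HBp.
  rewrite /v2; apply: abs_mul_le; [exact: Hkb | exact: Hvrb].
pose Bd := Rb * Bw.
have Hdb : forall l t, 1 <= t -> box Bd (d l t).
  move=> l t Ht k; rewrite /d /Bd.
  apply: Rle_trans (matvec_bd (Rm l) k (HBw l t Ht)) _.
  apply: Rmult_le_compat_r => //.
pose Mf := Rmax M (Rmax Bu Bd).
have [Bf [HBf0 HBf]] := f_bound Hf Mf.
have Hxl : forall l t t' k, 1 <= t -> 1 <= t' ->
    Rabs (x l t k - x l t' k) <= Bf * Rabs (t - t').
  move=> l t t' k Ht Ht'.
  apply: (mvt_seg (F := fun tt => x l tt k)
                  (F' := fun c => f (x l c) (u l c) (d l c) k)) => c Hc.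
  have Hc1 : 1 <= c by have := Rmin_glb t t' 1 Ht Ht'; lra.
  split; first exact: (Hx l c ltac:(lra) k).
  apply: HBf.
  - apply: box_mon (Hxb l c Hc1) (Rmax_l _ _).
  - apply: box_mon (Hub l c Hc1) _; apply: Rle_trans (Rmax_r _ _); exact: Rmax_l.
  - apply: box_mon (Hdb l c Hc1) _; apply: Rle_trans (Rmax_r _ _); exact: Rmax_r.
pose Ly := Lh * (INR n * Bf).
have HLy0 : 0 <= Ly.
  rewrite /Ly; apply: Rmult_le_pos => //; apply: Rmult_le_pos => //; exact: pos_INR.
have Hyl : forall l t t' k, 1 <= t -> 1 <= t' ->
    Rabs (y l t k - y l t' k) <= Ly * Rabs (t - t').
  move=> l t t' k Ht Ht'.
  apply: Rle_trans (HLh k _ _ (Hxb l t Ht) (Hxb l t' Ht')) _.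
  have : norm1 (vsub (x l t) (x l t')) <= INR n * (Bf * Rabs (t - t')).
    apply: norm1_small => kk; exact: Hxl.
  move=> H1; have := Rmult_le_compat_l Lh _ _ HLh0 H1; rewrite /Ly; lra.
case: (eqVneq i j) => [Hij|Hij].
  subst j; exists 1; split; first lra.
  by move=> t Ht; rewrite vnorm_self.
have Hij' : i <> j by apply/eqP.
have Hji' : j <> i by move=> H; apply: Hij'.
have [g Hg] := proj1 (proj2 Hedges) i j Hij'.
pose Z tt := dot (vsub (y i tt) (y j tt)) (vsub (y i tt) (y j tt)).
have Hsq : sqrt a * sqrt a = a by apply: sqrt_sqrt; lra.
have Hvr2 : forall tt, dot (vr g tt) (vr g tt) = a * Z tt.
  move=> tt; rewrite /Z /dot -rsum_scal; apply: rsum_ext => k.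
  case: Hg => He.
  - have E1 : vr g tt k = sqrt a * (y j tt k - y i tt k).
      exact: (incid_sum a (fun l => y l tt k) He Hij').
    rewrite E1 /vsub.
    transitivity ((sqrt a * sqrt a) * ((y i tt k - y j tt k) * (y i tt k - y j tt k))).
      ring.
    by rewrite Hsq.
  - have E1 : vr g tt k = sqrt a * (y i tt k - y j tt k).
      exact: (incid_sum a (fun l => y l tt k) He Hji').
    rewrite E1 /vsub.
    transitivity ((sqrt a * sqrt a) * ((y i tt k - y j tt k) * (y i tt k - y j tt k))).
      ring.
    by rewrite Hsq.
have HkZ : forall tt, 1 <= tt -> derivable_pt_lim (kappa g) tt (delta g * a * Z tt).
  move=> tt Htt; have := Hkappa g tt ltac:(lra); rewrite Hvr2 Rmult_assoc; done.
have HZ0 : forall tt, 0 <= Z tt by move=> tt; apply: dot_ge0.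
have Hda : 0 <= delta g * a by have := Hdelta g; nra.
have Hkmono : forall tt tt', 1 <= tt -> tt <= tt' -> kappa g tt <= kappa g tt'.
  move=> tt tt' H1 H2.
  have := mvt_lower (F := kappa g) (F' := fun c => delta g * a * Z c) (m := 0) H2.
  move=> H; have := H (fun c Hc => conj (HkZ c ltac:(lra)) (Rmult_le_pos _ _ Hda (HZ0 c))).
  lra.
pose LZ := INR q * (8 * Ly * By) + 1.
have HLZpos : 0 < LZ.
  rewrite /LZ; have := Rmult_le_pos _ _ (pos_INR q)
     (Rmult_le_pos _ _ (Rmult_le_pos _ _ (ltac:(lra) : 0 <= 8) HLy0) HBy0); lra.
have HLZ : forall tt tt', 1 <= tt -> 1 <= tt' -> Rabs (Z tt - Z tt') <= LZ * Rabs (tt - tt').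
  move=> tt tt' H1 H2; rewrite /Z /dot rsum_sub.
  apply: Rle_trans (rsum_abs _) _.
  apply: (@Rle_trans _ (rsum (fun _ => 8 * Ly * By * Rabs (tt - tt')))).
    apply: rsum_le => k; rewrite /vsub.
    have hA := Hyl i tt tt' k H1 H2; have hB := Hyl j tt tt' k H1 H2.
    have b1 := Hyb i tt H1 k; have b2 := Hyb j tt H1 k.
    have b3 := Hyb i tt' H2 k; have b4 := Hyb j tt' H2 k.
    set A := y i tt k in hA hB b1 b2 b3 b4 *.
    set B := y j tt k in hA hB b1 b2 b3 b4 *.
    set A' := y i tt' k in hA hB b1 b2 b3 b4 *.
    set B' := y j tt' k in hA hB b1 b2 b3 b4 *.
    have -> : (A - B) * (A - B) - (A' - B') * (A' - B') =
              ((A - A') - (B - B')) * ((A - B) + (A' - B')) by ring.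
    apply: Rle_trans (abs_mul_le (A := 2 * Ly * Rabs (tt - tt')) (B := 4 * By) _ _) _.
    - have := abs_sub_le (A - A') (B - B'); lra.
    - have := Rabs_triang (A - B) (A' - B'); have := abs_sub_le A B;
      have := abs_sub_le A' B'; lra.
    - right; ring.
  rewrite rsum_const; have HD := Rabs_pos (tt - tt'); rewrite /LZ; nra.
pose Ek v := exists tt, 1 <= tt /\ v = kappa g tt.
have [Lk [HLk1 HLk2]] : {Lk | is_lub Ek Lk}.
  apply: completeness.
    exists M => v [tt [Htt ->]]; have := Hkb g tt Htt; have := Rle_abs (kappa g tt); lra.
  by exists (kappa g 1), 1; split; [lra | done].
pose tau := eps * eps / (2 * LZ).
have Htau : 0 < tau.
  rewrite /tau; apply: Rdiv_lt_0_compat; nra.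
have HLt : LZ * tau = eps * eps / 2 by rewrite /tau; field; lra.
pose cc := delta g * a * (eps * eps / 2) * tau.
have Hcc : 0 < cc.
  rewrite /cc; have := Hdelta g; move=> hd.
  apply: Rmult_lt_0_compat => //; apply: Rmult_lt_0_compat; last nra.
  exact: Rmult_lt_0_compat.
have [t1 [Ht1 Hkt1]] : exists t1, 1 <= t1 /\ Lk - cc < kappa g t1.
  apply: NNPP => Hn.
  have : Lk <= Lk - cc; last lra.
  apply: HLk2 => v [tt [Htt ->]]; apply: Rnot_lt_le => Hlt; apply: Hn.
  by exists tt; split.
exists t1; split; first lra.
move=> tt Htt.
have HZt : Z tt < eps * eps.
  apply: Rnot_le_lt => HZge.
  have Hlow : forall c, tt <= c <= tt + tau -> eps * eps / 2 <= Z c.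
    move=> c Hc; have H1 := HLZ tt c ltac:(lra) ltac:(lra).
    have H2 := Rle_abs (Z tt - Z c).
    rewrite [Rabs (tt - c)]Rabs_minus_sym (Rabs_right (c - tt)) in H1; last lra.
    have H3 : LZ * (c - tt) <= LZ * tau by apply: Rmult_le_compat_l; lra.
    lra.
  have Hinc := mvt_lower (F := kappa g) (F' := fun c => delta g * a * Z c)
     (m := delta g * a * (eps * eps / 2)) (t := tt) (t' := tt + tau) ltac:(lra)
     (fun c Hc => conj (HkZ c ltac:(lra)) (Rmult_le_compat_l _ _ _ Hda (Hlow c Hc))).
  have Hm1 := Hkmono t1 tt Ht1 Htt.
  have Hub2 : kappa g (tt + tau) <= Lk.
    by apply: HLk1; exists (tt + tau); split; [lra | done].
  have Hcc' : delta g * a * (eps * eps / 2) * (tt + tau - tt) = cc by rewrite /cc; ring.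
  lra.
change (sqrt (Z tt) < eps).
have := sqrt_lt_1_alt (Z tt) (eps * eps) (conj (dot_ge0 _) HZt).
rewrite sqrt_square; lra.
Qed.
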